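(* Let $a\in K$ be such that $K$ is finite-dimensional as a right vector space over $C(a)=\{b\in K^*:{}^{b}a=a\}\cup\{0\}$. Then a skew rational function with minimal representation $P(T)^{-1}Q(T)$ is defined at $a$ if and only if $P(c)\neq0$ for all $c\in\Delta(a)$.
   Context: Let $K$ be a skew field, $K^*=K\setminus\{0\}$, $\sigma\colon K\to K$ a ring endomorphism and $\delta\colon K\to K$ a $\sigma$-derivation. $K[T;\sigma,\delta]$ is the skew polynomial ring with $Ta=\sigma(a)T+\delta(a)$. The $(\sigma,\delta)$-action of $K^*$ on $K$ is ${}^{b}a=\sigma(b)ab^{-1}+\delta(b)b^{-1}$; $\Delta(a)=\{{}^{b}a:b\in K^*\}$. $C(a)$ is a skew subfield of $K$. For $P\in K[T;\sigma,\delta]$ and $a\in K$, $P(a)$ is the unique element of $K$ with $P(T)-P(a)\in K[T;\sigma,\delta](T-a)$. For a set $Z$ with a $K^*$-action, the skew product of functions $Z\to K$ is $(f\diamond g)(z)=f({}^{g(z)}z)g(z)$ if $g(z)\neq0$, $0$ otherwise; $f$ is skew invertible if some $g$ satisfies $f\diamond g=g\diamond f=1$. $K(T;\sigma,\delta)$ is the division ring of left fractions of $K[T;\sigma,\delta]$; each $f$ has a unique minimal representation $P(T)^{-1}Q(T)$ with $P$ monic of least degree; $f$ is defined at $a$ if the function $\Delta(a)\to K$, $c\mapsto P(c)$, is skew invertible. *)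

(* Defs.v *)
From HB Require Import structures.
From mathcomp Require Import all_boot all_order all_algebra.
From Stdlib Require Import ClassicalEpsilon.
Set Implicit Arguments. Unset Strict Implicit. Unset Printing Implicit Defensive.
Import GRing.Theory.
Local Open Scope ring_scope.

(* Skew polynomials in K[T; sigma, delta] are represented by their sequence of
   LEFT coefficients (P = sum_i p_i T^i), stored in the additive group {poly K}.
   The multiplication of {poly K} is NOT used as the skew product; the skew
   product is [skmul] below. *)

Section Skew.
Variable K : unitRingType.
Variable sigma : {rmorphism K -> K}.
Variable delta : K -> K.

Definition is_skew_field := forall x : K, x != 0 -> x \is a GRing.unit.

(* delta is a sigma-derivation: additive, delta(xy) = sigma(x) delta(y) + delta(x) y
   (the convention forced by T a = sigma(a) T + delta(a)). *)
Definition is_sigma_derivation :=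
  (forall x y : K, delta (x + y) = delta x + delta y) /\
  (forall x y : K, delta (x * y) = sigma x * delta y + delta x * y).

Definition skact (b a : K) : K := sigma b * a * b^-1 + delta b * b^-1.

Definition in_Delta (a c : K) : Prop := exists2 b : K, b != 0 & c = skact b a.

Definition in_C (a b : K) : Prop := (b != 0 /\ skact b a = a) \/ b = 0.

Definition right_findim_over (C : K -> Prop) : Prop :=
  exists s : seq K, forall x : K, exists cs : seq K,
    [/\ size cs = size s, (forall i, (i < size s)%N -> C cs`_i) &
        x = \sum_(i < size s) s`_i * cs`_i].

(* left multiplication by T:  T (sum b_i T^i) = sum (sigma b_i T^(i+1) + delta b_i T^i) *)
Definition mulT (p : {poly K}) : {poly K} := map_poly sigma p * 'X + map_poly delta p.

Definition skmul (p q : {poly K}) : {poly K} :=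
  \sum_(i < size p) (p`_i)%:P * iter i mulT q.

Definition skeval (p : {poly K}) (a : K) : K :=
  epsilon (inhabits 0) (fun r => exists q : {poly K}, p = skmul q ('X - a%:P) + r%:P).

(* skew product of functions Delta(a) -> K (functions are given on all of K,
   only their values on the invariant set Z matter) *)
Definition skprod (f g : K -> K) (z : K) : K :=
  if g z == 0 then 0 else f (skact (g z) z) * g z.

Definition skew_invertible (Z : K -> Prop) (f : K -> K) : Prop :=
  exists g : K -> K, forall z, Z z -> skprod f g z = 1 /\ skprod g f z = 1.

(* P^-1 Q = P'^-1 Q' in the division ring of left fractions K(T;sigma,delta)
   (left Ore localization): there are nonzero U, U' with U P = U' P', U Q = U' Q'. *)
Definition same_fraction (P Q P' Q' : {poly K}) : Prop :=
  exists U U' : {poly K},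
    [/\ U != 0, U' != 0, skmul U P = skmul U' P' & skmul U Q = skmul U' Q'].

Definition minimal_rep (P Q : {poly K}) : Prop :=
  P \is monic /\
  forall P' Q' : {poly K}, P' != 0 -> same_fraction P Q P' Q' -> (size P <= size P')%N.

Definition defined_at (P : {poly K}) (a : K) : Prop :=
  skew_invertible (in_Delta a) (fun c => skeval P c).

End Skew.

(* Main.v *)
Require Import Defs.
From HB Require Import structures.
From mathcomp Require Import all_boot all_order all_algebra.
From Stdlib Require Import ClassicalEpsilon Classical.
Set Implicit Arguments. Unset Strict Implicit. Unset Printing Implicit Defensive.
Import GRing.Theory.
Local Open Scope ring_scope.

Section LinAlg.
Variable K : unitRingType.
Hypothesis HK : is_skew_field K.
Variable C : K -> Prop.
Hypothesis C0 : C 0.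
Hypothesis C1 : C 1.
Hypothesis CD : forall x y, C x -> C y -> C (x + y).
Hypothesis CN : forall x, C x -> C (- x).
Hypothesis CM : forall x y, C x -> C y -> C (x * y).
Hypothesis CV : forall x, C x -> C x^-1.

Definition in_span (s : seq K) (x : K) := exists cs : nat -> K,
  (forall j, C (cs j)) /\ x = \sum_(j < size s) s`_j * cs j.

Definition ext n (j0 : 'I_n.+1) (c : 'I_n -> K) (c0 : K) (j : 'I_n.+1) : K :=
  match unlift j0 j with Some i => c i | None => c0 end.

Lemma sum_ext n j0 (v : 'I_n.+1 -> K) c c0 :
  \sum_j v j * ext j0 c c0 j = v j0 * c0 + \sum_(i < n) v (lift j0 i) * c i.
Proof.
rewrite (bigD1_ord j0) //= /ext unlift_none; congr (_ + _).
by apply: eq_bigr => i _; rewrite liftK.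
Qed.

Lemma dep n : forall s : seq K, size s = n -> forall v : 'I_n.+1 -> K,
  (forall i, in_span s (v i)) ->
  exists c : 'I_n.+1 -> K, (forall i, C (c i)) /\ (exists i, c i != 0) /\
     \sum_i v i * c i = 0.
Proof.
elim: n => [|n IH] s hs v hv.
  exists (fun _ => 1); split => //; split; first by exists ord0; exact: oner_neq0.
  by rewrite big_ord1 mulr1; have [cs [_ ->]] := hv ord0; rewrite hs big_ord0.
have hcs : forall i, {cs : nat -> K | (forall j, C (cs j)) /\
     v i = \sum_(j < n.+1) s`_j * cs j}.
  by move=> i; apply: constructive_indefinite_description; rewrite -hs; exact: hv.
pose cs i := sval (hcs i).
have hC i j : C (cs i j) by case: (svalP (hcs i)) => h _; exact: h.
have hv' i : v i = \sum_(j < n) s`_j * cs i j + s`_n * cs i n.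
  by case: (svalP (hcs i)) => _ ->; rewrite big_ord_recr.
pose s' := take n s.
have hs' : size s' = n by rewrite size_take hs leqnn.
have ee : forall f : nat -> K, \sum_(j < n) s`_j * f j = \sum_(j < size s') s'`_j * f j.
  by move=> f; rewrite hs'; apply: eq_bigr => j _; rewrite nth_take.
case: (classic (exists i0, cs i0 n != 0)) => [[i0 hi0]|hall].
  pose d i := cs i n.
  pose e i := (d i0)^-1 * d (lift i0 i).
  have he i : C (e i) by apply: CM; [apply: CV|]; exact: hC.
  pose w i := v (lift i0 i) - v i0 * e i.
  have hw i : in_span s' (w i).
    exists (fun j => cs (lift i0 i) j - cs i0 j * e i); split.
      by move=> j; apply: CD; [exact: hC| apply: CN; apply: CM; [exact: hC|exact: he]].
    rewrite -(ee (fun j => cs (lift i0 i) j - cs i0 j * e i)) /w !hv'.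
    rewrite [in RHS](eq_bigr (fun j : 'I_n => s`_j * cs (lift i0 i) j - (s`_j * cs i0 j) * e i));
      last by move=> j _; rewrite mulrBr mulrA.
    rewrite sumrB -mulr_suml mulrDl -(mulrA s`_n) /e /d mulVKr ?unitK //; last exact: HK.
    by rewrite opprD addrACA subrr addr0.
  case: (IH s' hs' w hw) => c [hcC [[i hi] hsum]].
  exists (ext i0 c (- \sum_i e i * c i)); split.
    move=> j; rewrite /ext; case: (unlift i0 j) => [k|] //; apply: CN.
    apply: big_ind => //.
    by move=> k _; apply: CM.
  split; first by exists (lift i0 i); rewrite /ext liftK.
  rewrite sum_ext -[RHS]hsum mulrN mulr_sumr -sumrN -big_split /=.
  by apply: eq_bigr => k _; rewrite /w mulrBl mulrA addrC.
have hall' i : cs i n = 0.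
  by case: (eqVneq (cs i n) 0) => // h; exfalso; apply: hall; exists i.
pose w (i : 'I_n.+1) := v (lift ord_max i).
have hw i : in_span s' (w i).
  by exists (cs (lift ord_max i)); split => //; rewrite /w hv' hall' mulr0 addr0 ee.
case: (IH s' hs' w hw) => c [hcC [[i hi] hsum]].
exists (ext ord_max c 0); split.
  by move=> j; rewrite /ext; case: unlift.
split; first by exists (lift ord_max i); rewrite /ext liftK.
by rewrite sum_ext mulr0 add0r.
Qed.


Lemma surj (s : seq K) (hspan : forall x, in_span s x) (lam : K -> K)
  (lD : forall x y, lam (x + y) = lam x + lam y)
  (lC : forall x c, C c -> lam (x * c) = lam x * c)
  (linj : forall x, lam x = 0 -> x = 0) : forall y, exists x, lam x = y.
Proof.
have l0 : lam 0 = 0 by apply: (addrI (lam 0)); rewrite -lD !addr0.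
have lN x : lam (- x) = - lam x.
  by apply: (addrI (lam x)); rewrite -lD !subrr l0.
move=> y; apply: NNPP => hy.
have key : forall m (c : nat -> K), (forall i, C (c i)) ->
    \sum_(i < m) iter i lam y * c i = 0 -> forall i, (i < m)%N -> c i = 0.
  elim=> [|m IHm] c hc hs i hi //.
  rewrite big_ord_recl /= in hs.
  have e : \sum_(i < m) iter (lift ord0 i) lam y * c (lift ord0 i)
       = lam (\sum_(i < m) iter i lam y * c i.+1).
    rewrite (big_morph _ lD l0); apply: eq_big => // j _; rewrite lC // lift0.
  rewrite e in hs.
  have c0 : c 0%N = 0.
    apply: NNPP => h0; apply: hy.
    exists (- (\sum_(i < m) iter i lam y * c i.+1) * (c 0%N)^-1).
    rewrite lC; last exact: CV.
    rewrite lN; move/eqP: hs; rewrite addr_eq0 => /eqP <-.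
    by rewrite mulrK //; apply: HK; apply/eqP.
  have hz : \sum_(i < m) iter i lam y * c i.+1 = 0.
    by apply: linj; move: hs; rewrite c0 mulr0 add0r.
  case: i hi => [//|i] hi.
  exact: (IHm (fun i => c i.+1) (fun i => hc _) hz).
have [c [hc [[i hi] hs]]] := @dep (size s) s erefl (fun i : 'I_(size s).+1 => iter i lam y)
   (fun i => hspan _).
pose cn k := if (k < (size s).+1)%N then c (inord k) else 0.
have hcn k : C (cn k) by rewrite /cn; case: ifP.
have : \sum_(k < (size s).+1) iter k lam y * cn k = 0.
  by rewrite -[RHS]hs; apply: eq_bigr => k _; rewrite /cn ltn_ord inord_val.
move/(key _ cn hcn)/(_ i (ltn_ord i)); rewrite /cn ltn_ord inord_val => h.
by move/eqP: hi.
Qed.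

End LinAlg.
Section Basic.
Variable K : unitRingType.
Variable sigma : {rmorphism K -> K}.
Variable delta : K -> K.
Hypothesis HK : is_skew_field K.
Hypothesis Hd : is_sigma_derivation sigma delta.

Lemma dD (x y : K) : delta (x + y) = delta x + delta y.
Proof. by case: Hd. Qed.
Lemma dM (x y : K) : delta (x * y) = sigma x * delta y + delta x * y.
Proof. by case: Hd. Qed.
Lemma d0 : delta 0 = 0.
Proof. by apply: (addrI (delta 0)); rewrite -dD !addr0. Qed.
Lemma dN (x : K) : delta (- x) = - delta x.
Proof. by apply: (addrI (delta x)); rewrite -dD !subrr d0. Qed.
Lemma d1 : delta 1 = 0.
Proof.
have := dM 1 1; rewrite mulr1 rmorph1 mul1r mulr1 => h.
by apply: (addrI (delta 1)); rewrite addr0 -{1}h.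
Qed.

Lemma unitK (x : K) : x != 0 -> x \is a GRing.unit.
Proof. exact: HK. Qed.

Lemma mulf_neq0' (x y : K) : x != 0 -> y != 0 -> x * y != 0.
Proof.
move=> hx hy; apply/eqP => hxy; move/eqP: hy; apply.
by rewrite -(mulKr (unitK hx) y) hxy mulr0.
Qed.

Lemma sigmaV (x : K) : x != 0 -> sigma x^-1 = (sigma x)^-1.
Proof. by move=> hx; rewrite rmorphV // unitK. Qed.

Lemma skact1 (z : K) : skact sigma delta 1 z = z.
Proof. by rewrite /skact rmorph1 d1 invr1 !mulr1 mul1r addr0. Qed.

Lemma skactM (x y z : K) : x != 0 -> y != 0 ->
  skact sigma delta x (skact sigma delta y z) = skact sigma delta (x * y) z.
Proof.
move=> hx hy; rewrite /skact dM rmorphM invrM ?unitK //.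
rewrite mulrDr mulrDl !mulrA mulrDl ?mulrA.
by rewrite mulrK ?unitK // -addrA mulrDl.
Qed.

Definition Dc (a b : K) := sigma b * a + delta b = a * b.

Lemma inC_Dc a b : in_C sigma delta a b <-> Dc a b.
Proof.
rewrite /in_C /Dc /skact; split.
  case=> [[hb e]|->]; last by rewrite rmorph0 d0 mul0r mulr0 addr0.
  by rewrite -{2}e -mulrDl divrK ?unitK.
move=> e; case: (eqVneq b 0) => hb; [by right|left; split => //].
by rewrite -mulrDl e mulrK ?unitK.
Qed.

Notation mT := (mulT sigma delta).
Notation skm := (skmul sigma delta).

Lemma coef_mulT (p : {poly K}) i :
  (mT p)`_i = (if i is j.+1 then sigma p`_j else 0) + delta p`_i.
Proof.
have cs j : (map_poly sigma p)`_j = sigma p`_j by rewrite coef_map_id0 ?rmorph0.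
have cd j : (map_poly delta p)`_j = delta p`_j by rewrite coef_map_id0 ?d0.
by rewrite /mulT coefD coefMX cd; case: i => [|i] //=; rewrite cs.
Qed.

Lemma mulT_D (p q : {poly K}) : mT (p + q) = mT p + mT q.
Proof.
apply/polyP => i; rewrite coefD !coef_mulT coefD dD.
by case: i => [|i]; rewrite ?coefD ?rmorphD ?add0r // addrACA.
Qed.

Lemma mulT0 : mT 0 = 0.
Proof. by apply/polyP => i; rewrite coef_mulT coef0 d0 addr0; case: i => // i; rewrite coef0 rmorph0. Qed.

Lemma mulT_C (k : K) (p : {poly K}) : mT (k%:P * p) = (sigma k)%:P * mT p + (delta k)%:P * p.
Proof.
apply/polyP => i; rewrite coef_mulT coefD !coefCM coef_mulT ?coefCM dM.
case: i => [|i]; rewrite ?coefCM ?rmorphM ?mulr0 ?add0r //.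
by rewrite mulrDr addrA.
Qed.

Lemma skm_widen m (q r : {poly K}) : (size q <= m)%N ->
  skm q r = \sum_(i < m) (q`_i)%:P * iter i mT r.
Proof.
move=> h; rewrite /skmul (big_ord_widen _ (fun i : nat => (q`_i)%:P * iter i mT r) h).
rewrite big_mkcond /=; apply: eq_bigr => i _; case: ifP => // /negbT.
by rewrite -leqNgt => hi; rewrite nth_default // mul0r.
Qed.

Lemma skm0 (r : {poly K}) : skm 0 r = 0.
Proof. by rewrite /skmul size_poly0 big_ord0. Qed.

Lemma skmD (q1 q2 r : {poly K}) : skm (q1 + q2) r = skm q1 r + skm q2 r.
Proof.
rewrite !(@skm_widen (maxn (size q1) (size q2))) ?size_polyD ?leq_maxl ?leq_maxr //.
by rewrite -big_split; apply: eq_bigr => i _; rewrite coefD polyCD mulrDl.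
Qed.

Lemma skmN (q r : {poly K}) : skm (- q) r = - skm q r.
Proof. by apply: (addrI (skm q r)); rewrite -skmD !subrr skm0. Qed.

Lemma skmCM (k : K) (q r : {poly K}) : skm (k%:P * q) r = k%:P * skm q r.
Proof.
rewrite !(@skm_widen (size q)) //; last first.
  by apply/leq_sizeP => j hj; rewrite coefCM nth_default ?mulr0.
by rewrite mulr_sumr; apply: eq_bigr => i _; rewrite coefCM polyCM mulrA.
Qed.

Lemma skmC (k : K) (r : {poly K}) : skm k%:P r = k%:P * r.
Proof. by rewrite (@skm_widen 1) ?size_polyC_leq1 // big_ord1 coefC. Qed.

Lemma mulT_skm (q r : {poly K}) : mT (skm q r) = skm (mT q) r.
Proof.
have hs : (size (mT q) <= (size q).+1)%N.
  apply/leq_sizeP => j hj; rewrite coef_mulT; case: j hj => [//|j] hj.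
  by rewrite !nth_default ?rmorph0 ?d0 ?addr0 // ltnW.
rewrite (@skm_widen (size q).+1 q) // (@skm_widen (size q).+1 (mT q)) //.
rewrite (big_morph _ mulT_D mulT0).
rewrite (eq_bigr (fun i : 'I_(size q).+1 => (sigma q`_i)%:P * iter i.+1 mT r
   + (delta q`_i)%:P * iter i mT r)); last by move=> i _; rewrite mulT_C.
rewrite [RHS](eq_bigr (fun i : 'I_(size q).+1 =>
   (if nat_of_ord i is j.+1 then sigma q`_j else 0)%:P * iter i mT r
   + (delta q`_i)%:P * iter i mT r)); last by move=> i _; rewrite coef_mulT polyCD mulrDl.
rewrite !big_split /=; congr (_ + _).
rewrite big_ord_recr big_ord_recl /= nth_default // rmorph0 !mul0r addr0 add0r.
by apply: eq_bigr.
Qed.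

Fixpoint Nn (c : K) i := if i is j.+1 then sigma (Nn c j) * c + delta (Nn c j) else 1.
Fixpoint Qn (c : K) i : {poly K} :=
  if i is j.+1 then mT (Qn c j) + (sigma (Nn c j))%:P else 0.

Lemma mT1 : mT 1 = 'X.
Proof.
apply/polyP => i; rewrite coef_mulT coef1 coefX.
case: i => [|[|i]] /=; by rewrite ?coef1 /= ?rmorph1 ?rmorph0 ?d0 ?d1 ?addr0 ?add0r.
Qed.

Lemma decomp (c : K) i : iter i mT 1 = skm (Qn c i) ('X - c%:P) + (Nn c i)%:P.
Proof.
elim: i => [|i IH] /=; first by rewrite skm0 add0r.
rewrite IH mulT_D mulT_skm -[(Nn c i)%:P]mulr1 mulT_C mT1 skmD skmC mulr1.
rewrite mulrBr -polyCM polyCD -!addrA; congr (_ + _).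
by rewrite addKr.
Qed.

Lemma iterT1 i : iter i mT 1 = 'X^i.
Proof.
elim: i => [|i IH] //=; rewrite IH /mulT map_polyXn exprSr.
have -> : map_poly delta 'X^i = 0.
  apply/polyP => j; rewrite coef_map_id0 ?d0 // coefXn coef0.
  by case: (j == i); rewrite ?d0 ?d1.
by rewrite addr0.
Qed.

Lemma Psum (P : {poly K}) : P = \sum_(i < size P) (P`_i)%:P * iter i mT 1.
Proof.
rewrite -[P in LHS]coefK poly_def; apply: eq_bigr => i _.
by rewrite iterT1 mul_polyC.
Qed.

Lemma skm_sum (I : Type) (rr : seq I) (F : I -> {poly K}) r :
  skm (\sum_(i <- rr) F i) r = \sum_(i <- rr) skm (F i) r.
Proof. exact: (big_morph _ (fun x y => skmD x y r) (skm0 r)). Qed.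

Lemma Pdecomp (P : {poly K}) (c : K) :
  P = skm (\sum_(i < size P) (P`_i)%:P * Qn c i) ('X - c%:P)
      + (\sum_(i < size P) P`_i * Nn c i)%:P.
Proof.
rewrite {1}[P]Psum skm_sum rmorph_sum -big_split /=.
apply: eq_bigr => i _; by rewrite (decomp c) mulrDr skmCM polyCM.
Qed.

Lemma iter_w (c : K) i : (size (iter i mT ('X - c%:P)%R) <= i.+2)%N /\
  (iter i mT ('X - c%:P))`_i.+1 = 1.
Proof.
elim: i => [|i [IH1 IH2]] /=.
  by rewrite size_XsubC coefB coefX coefC /= subr0.
split.
  apply/leq_sizeP => j hj; rewrite coef_mulT; case: j hj => [//|j] hj.
  by rewrite !nth_default ?rmorph0 ?d0 ?addr0 // (leq_trans IH1) // ltnW.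
by rewrite coef_mulT IH2 rmorph1 nth_default ?d0 ?addr0.
Qed.

Lemma skm_w0 (u : {poly K}) (k c : K) : skm u ('X - c%:P) = k%:P -> u = 0.
Proof.
move=> h; case: (eqVneq u 0) => // hu; exfalso.
have hn : (0 < size u)%N by rewrite size_poly_gt0.
move: h hu; rewrite -lead_coef_eq0 lead_coefE.
case e : (size u) hn => [//|m] _ h.
have := congr1 (fun p : {poly K} => p`_m.+1) h.
rewrite coefC /= /skmul e coef_sum big_ord_recr /= coefCM (iter_w c m).2 mulr1.
rewrite big1 ?add0r; first by move=> -> /eqP.
move=> i _; have hs := (iter_w c i).1.
rewrite coefCM [_`_m.+1]nth_default ?mulr0 //. apply: (leq_trans hs); rewrite ltnS; exact: ltn_ord.
Qed.

Lemma skeval_formula (P : {poly K}) (c : K) :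
  skeval sigma delta P c = \sum_(i < size P) P`_i * Nn c i.
Proof.
rewrite /skeval.
set r0 := \sum_(i < size P) P`_i * Nn c i.
set q0 := \sum_(i < size P) (P`_i)%:P * Qn c i.
set r := epsilon _ _.
have [q hq] : exists q, P = skm q ('X - c%:P) + r%:P.
  apply: (epsilon_spec (inhabits 0) (fun r => exists q, P = skm q ('X - c%:P) + r%:P)).
  by exists r0; exists q0; exact: Pdecomp.
have h0 := Pdecomp P c; rewrite -/r0 -/q0 in h0.
have e : skm (q - q0) ('X - c%:P) = (r0 - r)%:P.
  have hq' : skm q ('X - c%:P) = P - r%:P by rewrite [in RHS]hq addrK.
  have h0' : skm q0 ('X - c%:P) = P - r0%:P by rewrite [in RHS]h0 addrK.
  by rewrite skmD skmN polyCB hq' h0' opprB addrC addrA subrK.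
have := skm_w0 e; move/eqP; rewrite subr_eq0 => /eqP hqq.
move: e; rewrite hqq subrr skm0 => /esym /eqP; rewrite polyC_eq0 subr_eq0 => /eqP.
by [].
Qed.

Definition Ta (a x : K) := sigma x * a + delta x.

Lemma Nn_act (a b : K) i : b != 0 -> Nn (skact sigma delta b a) i * b = iter i (Ta a) b.
Proof.
move=> hb; elim: i => [|i IH] /=; first by rewrite mul1r.
have hcb : skact sigma delta b a * b = sigma b * a + delta b.
  by rewrite /skact -mulrDl divrK ?unitK.
by rewrite -IH /Ta rmorphM dM mulrDl -mulrA hcb mulrDr !mulrA addrA. 

Qed.

Lemma Ta_D a x y : Ta a (x + y) = Ta a x + Ta a y.
Proof. by rewrite /Ta rmorphD dD mulrDl addrACA. Qed.

Lemma Ta_C a x c : Dc a c -> Ta a (x * c) = Ta a x * c.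
Proof.
rewrite /Dc /Ta => hc; rewrite rmorphM dM -mulrA addrA -mulrDr hc.
by rewrite mulrA -mulrDl.
Qed.

Lemma iterTa_D a i x y : iter i (Ta a) (x + y) = iter i (Ta a) x + iter i (Ta a) y.
Proof. by elim: i => [|i IH] //=; rewrite IH Ta_D. Qed.

Lemma iterTa_C a i x c : Dc a c -> iter i (Ta a) (x * c) = iter i (Ta a) x * c.
Proof. by move=> hc; elim: i => [|i IH] //=; rewrite IH Ta_C. Qed.

Definition lam (P : {poly K}) a b := \sum_(i < size P) P`_i * iter i (Ta a) b.

Lemma lam_eval (P : {poly K}) a b : b != 0 ->
  skeval sigma delta P (skact sigma delta b a) * b = lam P a b.
Proof.
move=> hb; rewrite skeval_formula mulr_suml; apply: eq_bigr => i _.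
by rewrite -mulrA Nn_act.
Qed.

Lemma lam_D P a x y : lam P a (x + y) = lam P a x + lam P a y.
Proof.
by rewrite /lam -big_split; apply: eq_bigr => i _; rewrite iterTa_D mulrDr.
Qed.

Lemma lam_C P a x c : Dc a c -> lam P a (x * c) = lam P a x * c.
Proof.
move=> hc; rewrite /lam mulr_suml; apply: eq_bigr => i _.
by rewrite iterTa_C // mulrA.
Qed.

Lemma Dc0 a : Dc a 0.
Proof. by rewrite /Dc rmorph0 d0 mul0r mulr0 addr0. Qed.
Lemma Dc1 a : Dc a 1.
Proof. by rewrite /Dc rmorph1 d1 mul1r mulr1 addr0. Qed.
Lemma DcD a x y : Dc a x -> Dc a y -> Dc a (x + y).
Proof. by rewrite /Dc => hx hy; rewrite rmorphD dD mulrDl addrACA hx hy mulrDr. Qed.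
Lemma DcN a x : Dc a x -> Dc a (- x).
Proof. by rewrite /Dc => hx; rewrite rmorphN dN mulNr -opprD hx mulrN. Qed.
Lemma DcM a x y : Dc a x -> Dc a y -> Dc a (x * y).
Proof.
rewrite /Dc => hx hy; rewrite rmorphM dM -mulrA addrA -mulrDr hy.
by rewrite mulrA -mulrDl hx mulrA.
Qed.
Lemma DcV a x : Dc a x -> Dc a x^-1.
Proof.
case: (eqVneq x 0) => [->|hx]; first by rewrite invr0.
rewrite /Dc => hc.
have ux := unitK hx.
have us : sigma x \is a GRing.unit by apply: rmorph_unit.
have e1 : sigma x * delta x^-1 = - (delta x * x^-1).
  by apply/eqP; rewrite -addr_eq0 -dM mulrV // d1.
rewrite sigmaV //; apply: (mulrI us).
rewrite mulrDr e1 mulrA mulrV // mul1r mulrA.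
have -> : sigma x * a = a * x - delta x by rewrite -hc addrK.
by rewrite mulrBl mulrK.
Qed.

End Basic.

Unset Implicit Arguments.
Set Strict Implicit.

Theorem proposition3p4 (K : unitRingType) (sigma : {rmorphism K -> K}) (delta : K -> K)
  (HK : is_skew_field K) (Hdelta : is_sigma_derivation sigma delta) (a : K)
  (Hfin : right_findim_over (in_C sigma delta a))
  (P Q : {poly K}) (Hmin : minimal_rep sigma delta P Q) :
  defined_at sigma delta P a <->
  (forall c : K, in_Delta sigma delta a c -> skeval sigma delta P c != 0).
Proof.
split.
  move=> [g hg] c hc; apply/eqP => h0; have [_ h] := hg c hc.
  move: h; rewrite /skprod h0 eqxx => /eqP; by rewrite eq_sym oner_eq0.
move=> hne.
pose C := in_C sigma delta a.
have CC x : C x <-> Dc sigma delta a x by exact: inC_Dc.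
pose lm := lam sigma delta P a.
have lD x y : lm (x + y) = lm x + lm y by exact: lam_D.
have l0 : lm 0 = 0 by apply: (addrI (lm 0)); rewrite -lD !addr0.
have lN x : lm (- x) = - lm x by apply: (addrI (lm x)); rewrite -lD !subrr l0.
have lC x c : C c -> lm (x * c) = lm x * c.
  by move/CC => hc; exact: lam_C.
have linj x : lm x = 0 -> x = 0.
  move=> h; case: (eqVneq x 0) => // hx; exfalso.
  have := lam_eval HK Hdelta P a hx; rewrite -/lm h => /eqP.
  apply/negP; apply: mulf_neq0' => //; apply: hne; by exists x.
have linj2 x y : lm x = lm y -> x = y.
  move=> h; apply/eqP; rewrite -subr_eq0; apply/eqP; apply: linj.
  by rewrite lD lN h subrr.
have [s hs] := Hfin.
have hspan : forall x, in_span C s x.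
  move=> x.
  have [cs [hsz hcC ->]] := hs x.
  exists (fun j => if (j < size s)%N then cs`_j else 0); split.
    by move=> j; case: ifP => hj; [exact: hcC| apply/CC; exact: Dc0].
  by apply: eq_bigr => j _; rewrite ltn_ord.
have hsurj := surj HK (proj2 (CC 0) (Dc0 Hdelta _)) (proj2 (CC 1) (Dc1 Hdelta _))
  (fun x y hx hy => proj2 (CC _) (DcD Hdelta (proj1 (CC _) hx) (proj1 (CC _) hy)))
  (fun x hx => proj2 (CC _) (DcN Hdelta (proj1 (CC _) hx)))
  (fun x y hx hy => proj2 (CC _) (DcM Hdelta (proj1 (CC _) hx) (proj1 (CC _) hy)))
  (fun x hx => proj2 (CC _) (DcV HK Hdelta (proj1 (CC _) hx)))
  hspan lD lC linj.
pose ysel z := epsilon (inhabits 0) (fun y => y != 0 /\ z = skact sigma delta y a).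
pose xsel y := epsilon (inhabits 0) (fun x => lm x = y).
have hxsel y : lm (xsel y) = y.
  exact: (epsilon_spec (inhabits 0) (fun x => lm x = y) (hsurj y)).
have hysel z : in_Delta sigma delta a z -> ysel z != 0 /\ z = skact sigma delta (ysel z) a.
  case=> u hu hz.
  by apply: (epsilon_spec (inhabits 0) (fun y => y != 0 /\ z = skact sigma delta y a)); exists u.
have xne y : y != 0 -> xsel y != 0.
  by move=> hy; apply/eqP => h; move: (hxsel y); rewrite h l0 => /esym/eqP; apply/negP.
have ivn y : y != 0 -> y^-1 != 0 by move=> hy; rewrite invr_eq0.
exists (fun z => xsel (ysel z) * (ysel z)^-1).
move=> z hz; have [hy hzy] := hysel z hz.
split.
  rewrite /skprod /=.
  set y := ysel z in hy hzy *.
  have bn := xne y hy. have hb := hxsel y.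
  set b := xsel y in bn hb *.
  have gn : b * y^-1 != 0 by apply: mulf_neq0' => //; apply: ivn.
  rewrite (negbTE gn) {1}hzy skactM ?ivn // divrK ?unitK //.
  by rewrite mulrA (lam_eval HK Hdelta P a bn) -/lm hb mulrV ?unitK.
rewrite /skprod /=.
have fz := hne z hz; rewrite (negbTE fz).
case: hz => u hu hzu.
set v := skeval sigma delta P z in fz *.
have hv : v * u = lm u by rewrite /v hzu (lam_eval HK Hdelta P a hu).
have lun : lm u != 0 by rewrite -hv; apply: mulf_neq0'.
have hw : skact sigma delta v z = skact sigma delta (lm u) a.
  by rewrite {1}hzu skactM // hv.
have [hy' hwy'] := hysel _ (ex_intro2 _ _ (lm u) lun hw).
set y' := ysel _ in hy' hwy' *.
have bn := xne y' hy'. have hb := hxsel y'.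
set b' := xsel y' in bn hb *.
pose c := y'^-1 * lm u.
have hcC : C c.
  left; split; first by apply: mulf_neq0' => //; apply: ivn.
  rewrite -skactM ?ivn // -hw hwy' skactM ?ivn // mulVr ?unitK //.
  exact: skact1.
have hbc : b' * c = u.
  by apply: linj2; rewrite lC // hb /c mulrA mulrV ?unitK // mul1r.
have -> : v = lm u * u^-1 by rewrite -hv mulrK ?unitK.
by rewrite -mulrA (mulrA _ (lm u)) -/c mulrA hbc mulrV ?unitK.
Qed.
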